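(* Let $G$ be an infinite simple graph. Then either $\theta(G)=1$ (which happens exactly when $G$ is asymmetric), or $\theta(G)=\infty$, i.e. for no finite $k$ is every vertex coloring of $G$ using exactly $k$ colors distinguishing.
   Context: A vertex coloring of $G$ is distinguishing if no non-identity automorphism of $G$ maps every vertex to a vertex of the same color. The distinguishing threshold $\theta(G)$ is the minimum number $k$ such that every vertex coloring of $G$ using exactly $k$ colors is distinguishing, and $\theta(G)=\infty$ if no finite such $k$ exists. Equivalently, $\theta(G)-1$ is the supremum of the number of cycles (fixed points counted as cycles) of non-identity automorphisms of $G$. *)

(* Defs.v *)
From Stdlib Require Import List Arith.

Record simple_graph := SimpleGraph {
  vertex :> Type;
  adj : vertex -> vertex -> Prop;
  adj_sym : forall x y, adj x y -> adj y x;
  adj_irrefl : forall x, ~ adj x x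
}.

Definition infinite_graph (G : simple_graph) : Prop :=
  ~ exists l : list G, forall v : G, In v l.

Definition automorphism (G : simple_graph) (f : G -> G) : Prop :=
  (forall x y : G, f x = f y -> x = y) /\
  (forall y : G, exists x, f x = y) /\
  (forall x y : G, adj G x y <-> adj G (f x) (f y)).

Definition asymmetric (G : simple_graph) : Prop :=
  forall f : G -> G, automorphism G f -> forall x, f x = x.

Definition uses_exactly (G : simple_graph) (c : G -> nat) (k : nat) : Prop :=
  (forall v, c v < k) /\ (forall i, i < k -> exists v, c v = i).

Definition distinguishing (G : simple_graph) (c : G -> nat) : Prop :=
  forall f : G -> G, automorphism G f -> (forall v, c (f v) = c v) ->
    forall v, f v = v.

Definition all_k_distinguishing (G : simple_graph) (k : nat) : Prop :=
  forall c : G -> nat, uses_exactly G c k -> distinguishing G c.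

(* theta_is G (Some k): theta(G) = k, the least k >= 1 such that every coloring
   with exactly k colors is distinguishing; theta_is G None: theta(G) = infinity. *)
Definition theta_is (G : simple_graph) (t : option nat) : Prop :=
  match t with
  | Some k => 1 <= k /\ all_k_distinguishing G k /\
              (forall j, 1 <= j -> all_k_distinguishing G j -> k <= j)
  | None => forall k, 1 <= k -> ~ all_k_distinguishing G k
  end.

(* Main.v *)
Require Import Defs.
From Stdlib Require Import List Arith.
From Stdlib Require Import Classical ClassicalEpsilon Lia.

Fixpoint it {A} (n : nat) (f : A -> A) (x : A) : A :=
  match n with 0 => x | S n => f (it n f x) end.

Lemma it_add {A} (f : A -> A) a b x : it (a + b) f x = it a f (it b f x).
Proof. induction a; simpl; congruence. Qed.

Lemma it_comm {A} (f : A -> A) a b x : it a f (it b f x) = it b f (it a f x).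
Proof. rewrite <- !it_add. now rewrite Nat.add_comm. Qed.

Lemma it_auto (G : simple_graph) f n : automorphism G f -> automorphism G (it n f).
Proof.
  intros [Hi [Hs Ha]]. induction n as [|n [IHi [IHs IHa]]]; simpl.
  - split; [auto|split; [intros y; now exists y| tauto]].
  - split; [|split].
    + intros x y H. apply IHi, Hi, H.
    + intros y. destruct (Hs y) as [z Hz]. destruct (IHs z) as [w Hw].
      exists w. congruence.
    + intros x y. rewrite IHa. apply Ha.
Qed.

Lemma it_inj (G : simple_graph) f n : automorphism G f ->
  forall x y : G, it n f x = it n f y -> x = y.
Proof. intros H. apply (it_auto G f n H). Qed.

Lemma colorval_eq k i m i' m' : 1 <= k -> i + m' = i' + m ->
  (i + (k-1)*m) mod k = (i' + (k-1)*m') mod k.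
Proof.
  intros Hk H.
  assert (E : (i + (k-1)*m) + m' * k = (i' + (k-1)*m') + m * k) by nia.
  rewrite <- (Nat.Div0.mod_add (i + (k-1)*m) m' k) by lia.
  rewrite <- (Nat.Div0.mod_add (i' + (k-1)*m') m k) by lia.
  now rewrite E.
Qed.

Section CaseA.
Variable G : simple_graph.
Variable f : G -> G.
Hypothesis Hf : automorphism G f.
Variable x0 : G.
Hypothesis Hnp : forall n, 1 <= n -> it n f x0 <> x0.
Variable k : nat.
Hypothesis Hk : 1 <= k.

Lemma orb_inj a b : it a f x0 = it b f x0 -> a = b.
Proof.
  intros H. destruct (lt_eq_lt_dec a b) as [[Hl|He]|Hl]; auto; exfalso.
  - replace b with (a + (b - a)) in H by lia. rewrite it_add in H.
    apply it_inj in H; auto. symmetry in H. apply (Hnp (b - a)); auto; lia.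
  - replace a with (b + (a - b)) in H by lia. rewrite it_add in H.
    apply it_inj in H; auto. apply (Hnp (a - b)); auto; lia.
Qed.

Definition wit (v : G) (p : nat * nat) := it (fst p) f v = it (snd p) f x0.
Definition cv (p : nat * nat) := (snd p + (k-1) * fst p) mod k.

Lemma wit_eq v p q : wit v p -> wit v q -> cv p = cv q.
Proof.
  destruct p as [m i], q as [m' i']; unfold wit, cv; simpl; intros H1 H2.
  apply colorval_eq; auto. apply orb_inj.
  rewrite (Nat.add_comm i m'), (Nat.add_comm i' m), !it_add, <- H1, <- H2.
  rewrite <- !it_add. f_equal. lia.
Qed.

Definition colA (v : G) : nat :=
  match excluded_middle_informative (exists p, wit v p) with
  | left h => cv (proj1_sig (constructive_indefinite_description _ h))
  | right _ => 0 end.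

Lemma colA_wit v p : wit v p -> colA v = cv p.
Proof.
  intros H. unfold colA. destruct excluded_middle_informative as [h|h].
  - destruct constructive_indefinite_description as [q Hq]; simpl.
    apply (wit_eq v); auto.
  - exfalso; eauto.
Qed.

Lemma colA_nowit v : ~ (exists p, wit v p) -> colA v = 0.
Proof. intros H. unfold colA. destruct excluded_middle_informative; tauto. Qed.

Lemma colA_inv v : colA (it k f v) = colA v.
Proof.
  destruct (classic (exists p, wit v p)) as [[[m i] H]|H].
  - rewrite (colA_wit v (m, i) H).
    rewrite (colA_wit _ (m, i + k)).
    + unfold cv; simpl.
      replace (i + k + (k-1)*m) with ((i + (k-1)*m) + 1 * k) by lia.
      apply Nat.Div0.mod_add; lia.
    + unfold wit in *; simpl in *. rewrite it_comm, H, <- it_add.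
      f_equal; lia.
  - rewrite (colA_nowit v H). apply colA_nowit.
    intros [[m i] H2]. apply H. exists (m + k, i). unfold wit in *; simpl in *.
    now rewrite it_add.
Qed.

Lemma caseA : ~ all_k_distinguishing G k.
Proof.
  intros Hall. assert (Hd := Hall colA).
  assert (U : uses_exactly G colA k).
  { split.
    - intros v. destruct (classic (exists p, wit v p)) as [[p H]|H].
      + rewrite (colA_wit v p H). apply Nat.mod_upper_bound; lia.
      + rewrite colA_nowit; auto; lia.
    - intros j Hj. exists (it j f x0).
      rewrite (colA_wit _ (0, j)); [|reflexivity].
      unfold cv; simpl. rewrite Nat.mul_0_r, Nat.add_0_r.
      apply Nat.mod_small; auto. }
  specialize (Hd U (it k f) (it_auto G f k Hf) colA_inv x0).
  apply (Hnp k); auto.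
Qed.
End CaseA.

Section CaseB.
Variable G : simple_graph.
Hypothesis Hinf : infinite_graph G.
Variable f : G -> G.
Hypothesis Hf : automorphism G f.
Variable d : G.
Hypothesis Hper : forall x : G, exists p, 1 <= p /\ it p f x = x.

Definition O (x y : G) := exists n, it n f x = y.

Lemma O_refl x : O x x.
Proof. now exists 0. Qed.

Lemma O_trans x y z : O x y -> O y z -> O x z.
Proof. intros [a Ha] [b Hb]. exists (b + a). now rewrite it_add, Ha. Qed.

Lemma it_period (y : G) p : it p f y = y -> forall q r, it (q * p + r) f y = it r f y.
Proof.
  intros Hp q. induction q; intros r; simpl; auto.
  replace (p + q * p + r) with ((q * p + r) + p) by lia.
  rewrite it_add, Hp. auto.
Qed.

Lemma O_sym x y : O x y -> O y x.
Proof.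
  intros [n Hn]. destruct (Hper x) as [p [Hp1 Hp]].
  exists (n * p - n). rewrite <- Hn, <- it_add.
  replace (n * p - n + n) with (n * p + 0) by nia.
  apply it_period; auto.
Qed.

Lemma orbit_fin y : exists M, forall v, O y v -> In v M.
Proof.
  destruct (Hper y) as [p [Hp1 Hp]].
  exists (map (fun j => it j f y) (seq 0 p)).
  intros v [n Hn]. apply in_map_iff. exists (n mod p). split.
  - rewrite <- Hn. rewrite (Nat.div_mod_eq n p) at 2.
    rewrite Nat.mul_comm. symmetry. apply it_period; auto.
  - apply in_seq. split; [lia|]. simpl. apply Nat.mod_upper_bound; lia.
Qed.

Lemma union_fin L : exists M, forall y v, In y L -> O y v -> In v M.
Proof.
  induction L as [|a L [M HM]].
  - exists nil. intros y v [].
  - destruct (orbit_fin a) as [M1 HM1]. exists (M1 ++ M).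
    intros y v [<-|Hy] Ho; apply in_or_app; eauto.
Qed.

Definition Pw (L : list G) := forall i j, i < length L -> j < length L -> i <> j ->
  ~ O (nth i L d) (nth j L d).

Lemma build n : exists L, length L = n /\ Pw L.
Proof.
  induction n as [|n [L [HL HP]]].
  - exists nil. split; auto. intros i j Hi; simpl in Hi; lia.
  - destruct (union_fin L) as [M HM].
    assert (Hv : exists v, ~ In v M).
    { apply not_all_ex_not. intros H. apply Hinf. now exists M. }
    destruct Hv as [v Hv]. exists (v :: L). split; [simpl; lia|].
    intros [|i] [|j] Hi Hj Hij; simpl in *.
    + lia.
    + intros Ho. apply Hv. apply (HM (nth j L d)); [apply nth_In; lia|].
      now apply O_sym.
    + intros Ho. apply Hv. apply (HM (nth i L d)); [apply nth_In; lia|]. auto.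
    + apply HP; lia.
Qed.

Variable k : nat.
Hypothesis Hk : 1 <= k.
Variable L : list G.
Hypothesis HL : length L = k.
Hypothesis HP : Pw L.

Definition P v j := j < k /\ O (nth j L d) v.

Lemma P_uniq v j1 j2 : P v j1 -> P v j2 -> j1 = j2.
Proof.
  intros [H1 O1] [H2 O2]. destruct (Nat.eq_dec j1 j2); auto. exfalso.
  apply (HP j1 j2); try lia. eapply O_trans; eauto. now apply O_sym.
Qed.

Definition colB (v : G) : nat :=
  match excluded_middle_informative (exists j, P v j) with
  | left h => proj1_sig (constructive_indefinite_description _ h)
  | right _ => 0 end.

Lemma colB_P v j : P v j -> colB v = j.
Proof.
  intros H. unfold colB. destruct excluded_middle_informative as [h|h].
  - destruct constructive_indefinite_description as [q Hq]; simpl.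
    eapply P_uniq; eauto.
  - exfalso; eauto.
Qed.

Lemma colB_noP v : ~ (exists j, P v j) -> colB v = 0.
Proof. intros H. unfold colB. destruct excluded_middle_informative; tauto. Qed.

Lemma P_f v j : P v j <-> P (f v) j.
Proof.
  unfold P. split; intros [H1 H2]; split; auto.
  - eapply O_trans; eauto. now exists 1.
  - eapply O_trans; eauto. apply O_sym. now exists 1.
Qed.

Lemma caseB : (exists x, f x <> x) -> ~ all_k_distinguishing G k.
Proof.
  intros [x Hx] Hall.
  assert (U : uses_exactly G colB k).
  { split.
    - intros v. destruct (classic (exists j, P v j)) as [[j H]|H].
      + rewrite (colB_P v j H). apply H.
      + rewrite colB_noP; auto; lia.
    - intros j Hj. exists (nth j L d). apply colB_P. split; auto. apply O_refl. }
  apply Hx. apply (Hall colB U f Hf).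
  intros v. destruct (classic (exists j, P v j)) as [[j H]|H].
  - rewrite (colB_P v j H). apply colB_P. exact (proj1 (P_f v j) H).
  - rewrite (colB_noP v H). apply colB_noP. intros [j Hj]. apply H.
    exists j. exact (proj2 (P_f v j) Hj).
Qed.
End CaseB.

Lemma nonasym_none (G : simple_graph) (Hinf : infinite_graph G) :
  ~ asymmetric G -> forall k, 1 <= k -> ~ all_k_distinguishing G k.
Proof.
  intros Hna k Hk.
  apply not_all_ex_not in Hna. destruct Hna as [f Hf].
  apply imply_to_and in Hf. destruct Hf as [Hf Hx].
  apply not_all_ex_not in Hx. destruct Hx as [x Hx].
  destruct (classic (exists x0 : G, forall n, 1 <= n -> it n f x0 <> x0)) as [[x0 H0]|H0].
  - exact (caseA G f Hf x0 H0 k Hk).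
  - assert (Hper : forall y : G, exists p, 1 <= p /\ it p f y = y).
    { intros y. apply NNPP. intros Hc. apply H0. exists y. intros n Hn Heq.
      apply Hc. eauto. }
    destruct (build G Hinf f x Hper k) as [L [HL HP]].
    exact (caseB G f Hf x Hper k Hk L HL HP (ex_intro _ x Hx)).
Qed.

Lemma all1_asym (G : simple_graph) (Hinf : infinite_graph G) :
  all_k_distinguishing G 1 <-> asymmetric G.
Proof.
  split.
  - intros H f Hf. apply (H (fun _ => 0)); auto.
    split; [intros; lia|]. intros i Hi.
    apply NNPP. intros Hn. apply Hinf. exists nil. intros v. apply Hn.
    exists v. lia.
  - intros H c _ f Hf _. now apply H.
Qed.

Theorem mainTheorem8 (G : simple_graph) (Hinf : infinite_graph G) :
  (theta_is G (Some 1) \/ theta_is G None) /\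
  (theta_is G (Some 1) <-> asymmetric G).
Proof.
  assert (E : theta_is G (Some 1) <-> asymmetric G).
  { simpl. rewrite <- (all1_asym G Hinf). split.
    - tauto.
    - intros H. split; [lia|split; auto]. }
  split; auto.
  destruct (classic (asymmetric G)) as [Ha|Ha].
  - left. now apply E.
  - right. simpl. intros k Hk. exact (nonasym_none G Hinf Ha k Hk).
Qed.
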